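(* Let $\beta=(\pi_\ell)_{\ell=1}^L$ be a chainable architecture. The redundancy removal procedure applied to $\beta$ stops after finitely many iterations and returns an architecture $\beta'$ such that: (1) $\beta'$ is chainable and non-redundant, and either $\beta'=(\pi_1*\cdots*\pi_L)$ or $\beta'=(\pi_1*\cdots*\pi_{\ell_1},\ \pi_{\ell_1+1}*\cdots*\pi_{\ell_2},\ \dots,\ \pi_{\ell_p+1}*\cdots*\pi_L)$ for some indices $1\le\ell_1<\cdots<\ell_p<L$ with $p\in\{1,\dots,L-1\}$; (2) $\mathcal{B}^{\beta'}=\mathcal{B}^\beta$; (3) $\|\beta'\|_0\le\|\beta\|_0$.
   Context: A pattern is a tuple $\pi=(a,b,c,d)$ of positive integers; $\mathbf{S}_\pi:=\mathbf{I}_a\otimes\mathbf{1}_{b\times c}\otimes\mathbf{I}_d\in\{0,1\}^{abd\times acd}$. A $\pi$-factor is a complex $abd\times acd$ matrix with support contained in that of $\mathbf{S}_\pi$. Patterns $\pi_1=(a_1,b_1,c_1,d_1),\pi_2=(a_2,b_2,c_2,d_2)$ are chainable if $a_1c_1/a_2=b_2d_2/d_1=:r(\pi_1,\pi_2)$ is an integer, $a_1\mid a_2$, $d_2\mid d_1$; then $\pi_1*\pi_2:=(a_1,b_1d_1/d_2,a_2c_2/a_1,d_2)$. A chainable pair is redundant if $r(\pi_1,\pi_2)\ge\min(b_1,c_2)$. An architecture $\beta=(\pi_\ell)_{\ell=1}^L$ is a sequence of patterns with $a_\ell c_\ell d_\ell=a_{\ell+1}b_{\ell+1}d_{\ell+1}$;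 it is chainable if every consecutive pair is chainable (depth $1$: chainable by convention), and a chainable architecture is redundant if some consecutive pair $(\pi_\ell,\pi_{\ell+1})$ is redundant (depth $1$: non-redundant). $\pi_p*\cdots*\pi_q$ is the iterated product. $\mathcal{B}^\beta:=\{\mathbf{X}_1\cdots\mathbf{X}_L:\mathbf{X}_\ell\text{ a }\pi_\ell\text{-factor}\}$ and $\|\beta\|_0:=\sum_{\ell}a_\ell b_\ell c_\ell d_\ell$. The redundancy removal procedure: set $\beta'\leftarrow\beta$; while $\beta'=(\pi'_\ell)_{\ell=1}^{L'}$ is redundant, choose any $\ell$ such that $(\pi'_\ell,\pi'_{\ell+1})$ is redundant and replace $\beta'$ by $(\pi'_1,\dots,\pi'_{\ell-1},\pi'_\ell*\pi'_{\ell+1},\pi'_{\ell+2},\dots,\pi'_{L'})$; return $\beta'$. *)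

(* Defs.v *)
From HB Require Import structures.
From mathcomp Require Import all_boot all_order all_algebra.
From mathcomp Require Import reals.
From mathcomp Require Import complex.
Set Implicit Arguments. Unset Strict Implicit. Unset Printing Implicit Defensive.
Import Order.TTheory GRing.Theory Num.Theory.

Record pattern := Pat { pa : nat; pb : nat; pc : nat; pd : nat }.

Definition pattern_pos (p : pattern) : bool :=
  [&& 0 < pa p, 0 < pb p, 0 < pc p & 0 < pd p].

Definition prows (p : pattern) : nat := pa p * pb p * pd p.
Definition pcols (p : pattern) : nat := pa p * pc p * pd p.

(* Chainability of (p1,p2): a1 c1 / a2 = b2 d2 / d1 is an integer r, a1 | a2, d2 | d1. *)
Definition chainable_pair (p1 p2 : pattern) : bool :=
  [&& pa p2 %| pa p1 * pc p1,
      (pa p1 * pc p1 %/ pa p2) * pd p1 == pb p2 * pd p2,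
      pa p1 %| pa p2 & pd p2 %| pd p1].

Definition rpair (p1 p2 : pattern) : nat := pa p1 * pc p1 %/ pa p2.

Definition pstar (p1 p2 : pattern) : pattern :=
  Pat (pa p1) (pb p1 * pd p1 %/ pd p2) (pa p2 * pc p2 %/ pa p1) (pd p2).

Definition redundant_pair (p1 p2 : pattern) : bool :=
  chainable_pair p1 p2 && (minn (pb p1) (pc p2) <= rpair p1 p2).

Definition consec (T : Type) (R : rel T) (s : seq T) : bool :=
  if s is x :: s' then path R x s' else true.

Definition architecture (beta : seq pattern) : bool :=
  [&& size beta > 0, all pattern_pos beta &
      consec (fun p q => pcols p == prows q) beta].

Definition chainable (beta : seq pattern) : bool := consec chainable_pair beta.

Definition dflt_pattern : pattern := Pat 1 1 1 1.

(* A chainable architecture is redundant if some consecutive pair is redundant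
   (depth 1: never redundant). Indices l are 0-based here. *)
Definition redundant (beta : seq pattern) : bool :=
  chainable beta &&
  has (fun l => redundant_pair (nth dflt_pattern beta l) (nth dflt_pattern beta l.+1))
      (iota 0 (size beta).-1).

Definition iprod (s : seq pattern) : pattern :=
  foldl pstar (head dflt_pattern s) (behead s).

Definition merge_at (beta : seq pattern) (l : nat) : seq pattern :=
  take l beta ++ pstar (nth dflt_pattern beta l) (nth dflt_pattern beta l.+1)
       :: drop l.+2 beta.

Definition rr_step (beta beta' : seq pattern) : Prop :=
  redundant beta /\
  exists l, l.+1 < size beta /\
    redundant_pair (nth dflt_pattern beta l) (nth dflt_pattern beta l.+1) /\
    beta' = merge_at beta l.

Inductive rr_reach (beta : seq pattern) : seq pattern -> Prop :=
| rr_refl : rr_reach beta beta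
| rr_next b1 b2 : rr_reach beta b1 -> rr_step b1 b2 -> rr_reach beta b2.

Definition norm0 (beta : seq pattern) : nat :=
  \sum_(p <- beta) (pa p * pb p * pc p * pd p).

Section Mat.
Variable R : realType.
Local Open Scope ring_scope.
Definition C := R[i].

Definition mat := nat -> nat -> C.

(* Support of S_pi = I_a (x) 1_{b x c} (x) I_d: row i = (i1 b + i2) d + i3,
   column j = (j1 c + j2) d + j3; the entry is 1 iff i1 = j1 and i3 = j3. *)
Definition in_support (p : pattern) (i j : nat) : bool :=
  [&& i < prows p, j < pcols p,
      i %/ (pb p * pd p) == j %/ (pc p * pd p) & i %% pd p == j %% pd p]%N.

Definition factor (p : pattern) (X : mat) : Prop :=
  forall i j, X i j != 0 -> in_support p i j.

Definition mulm (k : nat) (A B : mat) : mat :=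
  fun i j => \sum_(t < k) A i t * B t j.

Fixpoint prodm (s : seq (pattern * mat)) : mat :=
  match s with
  | [::] => fun _ _ => 0
  | [:: (_, X)] => X
  | (p, X) :: s' => mulm (pcols p) X (prodm s')
  end.

Definition Bset (beta : seq pattern) (M : mat) : Prop :=
  exists Xs : seq mat,
    [/\ size Xs = size beta,
        (forall l, (l < size beta)%N ->
           factor (nth dflt_pattern beta l) (nth (fun _ _ => 0) Xs l)) &
        M = prodm (zip beta Xs)].
End Mat.

(* Main.v *)
Require Import Defs.
From mathcomp Require Import all_boot all_order all_algebra.
From mathcomp Require Import reals complex.
From mathcomp Require Import zify.
From Stdlib Require Import FunctionalExtensionality.
Set Implicit Arguments. Unset Strict Implicit. Unset Printing Implicit Defensive.
Import GRing.Theory.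

Definition drel (p q : pattern) : bool := (pa p %| pa q) && (pd q %| pd p).

Lemma drel_trans : transitive drel.
Proof.
move=> y x z /andP[h1 h2] /andP[h3 h4]; apply/andP; split.
  exact: dvdn_trans h1 h3.
exact: dvdn_trans h4 h2.
Qed.

Lemma chain_drel p q : chainable_pair p q -> drel p q.
Proof. by case/and4P=> _ _ h1 h2; apply/andP. Qed.

Lemma pa_foldl x s : pa (foldl pstar x s) = pa x.
Proof. by elim: s x => //= y s IH x; rewrite IH. Qed.

Lemma pd_foldl x s : pd (foldl pstar x s) = pd (last x s).
Proof.
elim: s x => //= y s IH x; rewrite IH.
by case: s {IH}.
Qed.

Lemma pstarA x y z : pd y %| pd x -> pa y %| pa z ->
  pstar (pstar x y) z = pstar x (pstar y z).
Proof.
move=> h1 h2; rewrite /pstar /=.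
rewrite (divnK (dvdn_mull _ h1)) [pa y * _]mulnC (divnK (dvdn_mulr _ h2)) //.
Qed.

Lemma foldl_pstar s y x : sorted drel (y :: s) -> pd y %| pd x ->
  foldl pstar x (y :: s) = pstar x (foldl pstar y s).
Proof.
elim: s y x => //= z s IH y x /andP[/andP[hyz1 hyz2] hp] hyx.
rewrite (IH z (pstar x y)) //.
have -> : foldl pstar (pstar y z) s = pstar y (foldl pstar z s).
  by have := IH z y hp hyz2.
by rewrite pstarA // pa_foldl.
Qed.

Lemma iprod_cat s1 s2 : 0 < size s1 -> 0 < size s2 -> sorted drel (s1 ++ s2) ->
  iprod (s1 ++ s2) = pstar (iprod s1) (iprod s2).
Proof.
case: s1 => // x s1 _; case: s2 => // y s2 _.
rewrite /iprod /= foldl_cat => h.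
move: (h); rewrite cat_path => /andP[_ h2].
apply: foldl_pstar; first by case/andP: h2.
by rewrite pd_foldl; move: h2 => /= /andP[/andP[_ ->] _].
Qed.

Lemma reshape_merge (T : Type) l (ns : seq nat) (s : seq T) : l.+1 < size ns ->
  reshape (take l ns ++ (nth 0 ns l + nth 0 ns l.+1) :: drop l.+2 ns) s =
  take l (reshape ns s) ++ (nth [::] (reshape ns s) l ++ nth [::] (reshape ns s) l.+1)
     :: drop l.+2 (reshape ns s).
Proof.
elim: l ns s => [|l IH] [|n0 [|n1 ns]] s //= h.
  by rewrite drop0 takeD drop_drop addnC drop0.
by rewrite IH.
Qed.

Lemma take_drop_split (T : Type) (x0 : T) l (s : seq T) : l.+1 < size s ->
  s = take l s ++ nth x0 s l :: nth x0 s l.+1 :: drop l.+2 s.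
Proof.
move=> h; rewrite -{1}(cat_take_drop l s); congr (_ ++ _).
rewrite (drop_nth x0) ?(drop_nth x0 (n:=l.+1)) //; exact: ltnW.
Qed.

Lemma path_mid (e : rel pattern) x y z R h L :
  (forall w, e w x -> e w z) -> (forall w, e y w -> e z w) ->
  path e h (L ++ x :: y :: R) -> path e h (L ++ z :: R).
Proof.
move=> H1 H2; elim: L h => [|w L IH] h /=.
  case/and3P=> hx _; case: R => [|w R] /=; first by rewrite H1.
  by case/andP=> hw ->; rewrite H1 // H2.
by case/andP=> -> /IH.
Qed.

Lemma consec_mid (e : rel pattern) x y z R L :
  (forall w, e w x -> e w z) -> (forall w, e y w -> e z w) ->
  consec e (L ++ x :: y :: R) -> consec e (L ++ z :: R).
Proof.
move=> H1 H2; case: L => [|h L] /=; last exact: path_mid.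
case/andP=> _; case: R => [|w R] //= /andP[hw ->]; by rewrite H2.
Qed.

Lemma chain_left o p q : chainable_pair p q -> chainable_pair o p ->
  chainable_pair o (pstar p q).
Proof.
case/and4P=> _ _ hpq1 hpq2 /and4P[h1 /eqP h2 h3 h4]; apply/and4P; split => //=.
  by rewrite h2 (divnK (dvdn_mull _ hpq2)).
exact: dvdn_trans hpq2 h4.
Qed.

Lemma chain_right p q w : chainable_pair p q -> chainable_pair q w ->
  chainable_pair (pstar p q) w.
Proof.
case/and4P=> _ _ hpq1 hpq2 /and4P[h1 /eqP h2 h3 h4]; apply/and4P; split => //=.
- by rewrite [pa p * _]mulnC (divnK (dvdn_mulr _ hpq1)).
- by rewrite [pa p * _]mulnC (divnK (dvdn_mulr _ hpq1)) h2.
exact: dvdn_trans hpq1 h3.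
Qed.


Lemma pat_eta p : p = Pat (pa p) (pb p) (pc p) (pd p).
Proof. by case: p. Qed.

Lemma chain_decomp p q : pattern_pos p -> pattern_pos q -> chainable_pair p q ->
  exists s t r, [/\ p = Pat (pa p) (pb p) (s * r) (t * pd q),
                    q = Pat (pa p * s) (r * t) (pc q) (pd q),
                    rpair p q = r &
                    pstar p q = Pat (pa p) (pb p * t) (s * pc q) (pd q)].
Proof.
case: p => a b1 c1 d1; case: q => a2 b2 c2 d.
rewrite /pattern_pos /chainable_pair /rpair /pstar /=.
case/and4P=> ha hb1 hc1 hd1 /and4P[ha2 hb2 hc2 hd].
case/and4P=> h1 /eqP h2 /dvdnP[s hs] /dvdnP[t ht].
set r := a * c1 %/ a2 in h2 *.
have hr : a * c1 = r * a2 by rewrite /r divnK.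
exists s, t, r.
have ec1 : c1 = s * r.
  apply/eqP; rewrite -(eqn_pmul2l ha); apply/eqP; rewrite hr hs; lia.
have eb2 : b2 = r * t.
  apply/eqP; rewrite -(eqn_pmul2r hd); apply/eqP; rewrite -h2 ht; lia.
split => //.
- by rewrite ec1 ht.
- by rewrite eb2 hs mulnC.
have -> : b1 * d1 = (b1 * t) * d by rewrite ht; lia.
have -> : a2 * c2 = (s * c2) * a by rewrite hs; lia.
by rewrite !mulnK.
Qed.

Definition wt (p : pattern) := pa p * pb p * pc p * pd p.

Lemma norm0_split l b : l.+1 < size b ->
  norm0 b = norm0 (take l b) + wt (nth dflt_pattern b l) + wt (nth dflt_pattern b l.+1)
            + norm0 (drop l.+2 b).
Proof.
move=> h; rewrite /norm0 {1}(take_drop_split dflt_pattern h) big_cat /= !big_cons.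
rewrite /wt; lia.
Qed.

Lemma merge_split l b : l.+1 < size b ->
  norm0 (merge_at b l) = norm0 (take l b) +
     wt (pstar (nth dflt_pattern b l) (nth dflt_pattern b l.+1)) + norm0 (drop l.+2 b).
Proof.
move=> h; rewrite /norm0 /merge_at big_cat /= !big_cons /wt; lia.
Qed.

Lemma wt_merge p q : pattern_pos p -> pattern_pos q -> redundant_pair p q ->
  wt (pstar p q) <= wt p + wt q.
Proof.
move=> pp pq /andP[hc hm].
have [s [t [r [ep eq er es]]]] := chain_decomp pp pq hc.
have Ec : pc p = s * r by rewrite {1}ep.
have Ed : pd p = t * pd q by rewrite {1}ep.
have Ea : pa q = pa p * s by rewrite {1}eq.
have Eb : pb q = r * t by rewrite {1}eq.
rewrite es /wt /= Ec Ed Ea Eb.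
rewrite er in hm.
have H : pb p * pc q <= r * (pb p + pc q).
  case: (leqP (pb p) (pc q)) => hbc.
    have : pb p <= r by move: hm; rewrite (minn_idPl hbc).
    move=> hr; nia.
  have : pc q <= r by move: hm; rewrite (minn_idPr (ltnW hbc)).
  move=> hr; nia.
have H2 := leq_mul (leqnn (pa p * s * t * pd q)) H.
move: H2; set X := pa p * s * t * pd q; set Y := pb p; set Z := pc q.
rewrite /X /Y /Z; lia.
Qed.

Lemma norm0_merge l b : l.+1 < size b ->
  pattern_pos (nth dflt_pattern b l) -> pattern_pos (nth dflt_pattern b l.+1) ->
  redundant_pair (nth dflt_pattern b l) (nth dflt_pattern b l.+1) ->
  norm0 (merge_at b l) <= norm0 b.
Proof.
move=> h p1 p2 hr; rewrite merge_split // (norm0_split h).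
have := wt_merge p1 p2 hr; lia.
Qed.

Lemma size_merge_at l b : l.+1 < size b -> size (merge_at b l) < size b.
Proof.
move=> h; rewrite /merge_at size_cat /= size_takel ?size_drop; lia.
Qed.


Section M.
Variable R : realType.
Local Open Scope ring_scope.

Lemma mulmA k0 k1 (A B Cm : mat R) :
  mulm k1 (mulm k0 A B) Cm = mulm k0 A (mulm k1 B Cm).
Proof.
apply: functional_extensionality => i; apply: functional_extensionality => j.
rewrite /mulm.
under eq_bigr do rewrite mulr_suml.
rewrite exchange_big /=; apply: eq_bigr => u _.
rewrite mulr_sumr; apply: eq_bigr => t _; by rewrite mulrA.
Qed.

Lemma prodm_cons (x : pattern * mat R) s : (0 < size s)%N ->
  prodm (x :: s) = mulm (pcols x.1) x.2 (prodm s).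
Proof. by case: s => // y s _; case: x. Qed.

Lemma prodm_merge (L Rr : seq (pattern * mat R)) p q pq X Y :
  pcols pq = pcols q ->
  prodm (L ++ (p, X) :: (q, Y) :: Rr) = prodm (L ++ (pq, mulm (pcols p) X Y) :: Rr).
Proof.
move=> hc; elim: L => [|x L IH].
  case: Rr => [|y Rr] //.
  by rewrite cat0s (prodm_cons (p, X)) // (prodm_cons (q, Y)) // (prodm_cons (pq, _)) //= hc mulmA.
by rewrite cat_cons prodm_cons ?size_cat ?addnS // [RHS]prodm_cons ?size_cat ?addnS // IH.
Qed.

Fixpoint allf (s : seq (pattern * mat R)) : Prop :=
  match s with [::] => True | (p, X) :: s' => factor p X /\ allf s' end.

Lemma allf_cat s1 s2 : allf (s1 ++ s2) <-> allf s1 /\ allf s2.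
Proof.
elim: s1 => [|[p X] s1 IH] /=; first by split=> // -[].
rewrite IH; tauto.
Qed.

Lemma allf_zip (b : seq pattern) (Xs : seq (mat R)) : size Xs = size b ->
  (forall l, (l < size b)%N -> factor (nth dflt_pattern b l) (nth (fun _ _ => 0) Xs l)) ->
  allf (zip b Xs).
Proof.
elim: b Xs => [|p b IH] [|X Xs] //= [hs] h; split; first exact: (h 0%N).
apply: IH => // l hl; exact: (h l.+1).
Qed.

Lemma allf_nth (s : seq (pattern * mat R)) l : allf s -> (l < size s)%N ->
  factor (nth (dflt_pattern, fun _ _ => 0) s l).1 (nth (dflt_pattern, fun _ _ => 0) s l).2.
Proof.
elim: s l => [|[p X] s IH] // l [h1 h2] hl.
by case: l hl => [|l] hl //=; apply: IH.
Qed.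

Lemma Bset_alt b (M : mat R) :
  Bset b M <-> exists s, [/\ map fst s = b, allf s & M = prodm s].
Proof.
split.
  case=> Xs [hs hf ->]; exists (zip b Xs); split => //.
    by rewrite -/(unzip1 _) unzip1_zip // hs.
  exact: allf_zip.
case=> s [hb hf ->]; exists (map snd s); split.
- by rewrite -hb !size_map.
- move=> l hl; rewrite -hb in hl *; rewrite size_map in hl.
  rewrite (nth_map (dflt_pattern, fun _ _ => 0)) //.
  rewrite (nth_map (dflt_pattern, fun _ _ => 0)) //.
  exact: allf_nth.
- by rewrite -hb zip_unzip.
Qed.

Lemma Bset_merge b l (M : mat R) : (l.+1 < size b)%N ->
  let p := nth dflt_pattern b l in let q := nth dflt_pattern b l.+1 in
  pcols (pstar p q) = pcols q ->
  (forall X Y : mat R, factor p X -> factor q Y -> factor (pstar p q) (mulm (pcols p) X Y)) ->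
  (forall Z : mat R, factor (pstar p q) Z ->
     exists X Y, [/\ factor p X, factor q Y & Z = mulm (pcols p) X Y]) ->
  (Bset (merge_at b l) M <-> Bset b M).
Proof.
move=> hl p q hc hmul hdec.
have hb := take_drop_split dflt_pattern hl.
have stl : size (take l b) = l by rewrite size_takel // ltnW // ltnW.
rewrite !Bset_alt; split.
  case=> s' [hb' hf ->].
  have hd : map fst (drop l s') = pstar p q :: drop l.+2 b.
    by rewrite map_drop hb' /merge_at drop_size_cat.
  have ht : map fst (take l s') = take l b.
    by rewrite map_take hb' /merge_at take_size_cat.
  move: hf; rewrite -(cat_take_drop l s').
  case E: (drop l s') hd => [|[pq' Z] sR] //= [epq hR].
  rewrite epq; case/allf_cat => hfL /= [hZ hfR].
  have [X [Y [hX hY eZ]]] := hdec Z hZ.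
  exists (take l s' ++ (p, X) :: (q, Y) :: sR); split.
  - by rewrite map_cat ht /= hR.
  - by apply/allf_cat; split.
  - by rewrite (prodm_merge _ _ _ _ _ hc) -eZ.
case=> s [hb' hf ->].
have hd : map fst (drop l s) = p :: q :: drop l.+2 b.
  by rewrite map_drop hb' {1}hb drop_size_cat.
have ht : map fst (take l s) = take l b.
  by rewrite map_take hb' {1}hb take_size_cat.
move: hf; rewrite -(cat_take_drop l s).
case E: (drop l s) hd => [|[p' X] [|[q' Y] sR]] //= [ep eq hR].
rewrite ep eq; case/allf_cat => hfL /= [hX [hY hfR]].
exists (take l s ++ (pstar p q, mulm (pcols p) X Y) :: sR); split.
- by rewrite map_cat ht /= hR.
- by apply/allf_cat; split => //; split => //; apply: hmul.
- by rewrite (prodm_merge _ _ _ _ _ hc).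
Qed.
End M.


Lemma divA3 k x y z : k %/ (x * y * z) = k %/ z %/ y %/ x.
Proof. by rewrite [x * y * z]mulnC [x * y]mulnC mulnA !divnMA. Qed.

Lemma divA2 k x z : k %/ (x * z) = k %/ z %/ x.
Proof. by rewrite mulnC divnMA. Qed.

Lemma modd k t d : k %% (t * d) %% d = k %% d.
Proof. exact: modn_dvdm (dvdn_mull _ (dvdnn _)). Qed.

Lemma fmul (R : realType) a b1 s r t d c2 (X Y : mat R) :
  factor (Pat a b1 (s * r) (t * d)) X -> factor (Pat (a * s) (r * t) c2 d) Y ->
  factor (Pat a (b1 * t) (s * c2) d) (mulm (pcols (Pat a b1 (s * r) (t * d))) X Y).
Proof.
move=> hX hY i j; rewrite /mulm => hne.
case: (pickP (fun k : 'I_(pcols (Pat a b1 (s * r) (t * d))) => (X i k * Y k j != 0)%R))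
  => [k hk | h0]; last first.
  by move: hne; rewrite big1 ?eqxx // => k _; move/negbFE: (h0 k) => /eqP.
move: hk; rewrite mulf_eq0 negb_or => /andP[/hX h1 /hY h2].
move: h1 h2; rewrite /in_support /=.
case/and4P=> hi hk /eqP e1 /eqP e2 /and4P[_ hj /eqP e3 /eqP e4].
apply/and4P; split.
- by move: hi; rewrite /prows /= !mulnA.
- by move: hj; rewrite /pcols /= !mulnA.
- have E1 : i %/ (b1 * t * d) = i %/ (b1 * (t * d)) by rewrite mulnA.
  have E2 : k %/ (s * r * (t * d)) = k %/ (t * d) %/ r %/ s by rewrite divA3.
  have E3 : k %/ (r * t * d) = k %/ (t * d) %/ r by rewrite -mulnA divA2.
  have E4 : j %/ (s * c2 * d) = j %/ (c2 * d) %/ s by rewrite -mulnA (divA2 j s (c2 * d)).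
  by rewrite E1 e1 E2 E4 -e3 E3.
- by rewrite -(modd i t d) e2 modd e4.
Qed.

Lemma sum_unique (R : realType) a b1 s r t d c2 i j g (z : C R) :
  0 < t -> 0 < d -> 0 < c2 -> 0 < r ->
  in_support (Pat a (b1 * t) (s * c2) d) i j -> g < r ->
  (\sum_(k < pcols (Pat a b1 (s * r) (t * d)))
     (if [&& in_support (Pat a b1 (s * r) (t * d)) i k,
             in_support (Pat (a * s) (r * t) c2 d) k j & (k %/ (t * d) %% r == g)%N]
      then z else 0))%R = z.
Proof.
move=> ht hd hc2 hr hPQ hg.
have hD : 0 < t * d by rewrite muln_gt0 ht hd.
have /and4P[hi hj /eqP e1 /eqP e2] := hPQ.
rewrite /prows /pcols /= in hi hj e1 e2.
have hJ : j %/ (c2 * d) < a * s.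
  rewrite ltn_divLR ?muln_gt0 ?hc2 ?hd //; move: hj; rewrite !mulnA //.
remember (j %/ (c2 * d)) as J eqn:eJ.
have hk0D : ((J * r + g) * (t * d) + i %% (t * d)) %/ (t * d) = J * r + g.
  by rewrite divnMDl // divn_small ?addn0 // ltn_pmod.
have hk0m : ((J * r + g) * (t * d) + i %% (t * d)) %% (t * d) = i %% (t * d).
  by rewrite modnMDl modn_mod.
have hk0r : (J * r + g) %/ r = J by rewrite divnMDl // divn_small ?addn0.
have hk0rm : (J * r + g) %% r = g by rewrite modnMDl modn_small.
have hk0 : (J * r + g) * (t * d) + i %% (t * d) < a * (s * r) * (t * d).
  have h1 := leq_mul hJ (leqnn r).
  have h2 : (J * r + g).+1 <= a * s * r.
    apply: leq_trans h1; rewrite mulSn [r + _]addnC -addnS leq_add2l; exact: hg.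
  have h4 : i %% (t * d) < t * d := ltn_pmod _ hD.
  apply: leq_trans (_ : (J * r + g).+1 * (t * d) <= _).
    by rewrite mulSn [t * d + _]addnC ltn_add2l.
  by rewrite [a * (s * r)]mulnA; exact: leq_mul h2 (leqnn _).
remember ((J * r + g) * (t * d) + i %% (t * d)) as k0 eqn:ek0.
have E1 : i %/ (b1 * t * d) = i %/ (b1 * (t * d)) by rewrite mulnA.
have E4 : j %/ (s * c2 * d) = j %/ (c2 * d) %/ s by rewrite -mulnA (divA2 j s (c2 * d)).
have key : forall k, [&& in_support (Pat a b1 (s * r) (t * d)) i k,
             in_support (Pat (a * s) (r * t) c2 d) k j & (k %/ (t * d) %% r == g)]
           = (k == k0).
  move=> k; apply/idP/eqP.
    rewrite /in_support /prows /pcols /=.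
    case/and3P => /and4P[_ _ _ /eqP f2] /and4P[_ _ /eqP f3 _] /eqP f4.
    have f5 : k %/ (t * d) %/ r = J by rewrite eJ -f3 -[r * t * d]mulnA (divA2 k r (t * d)).
    rewrite ek0 {1}(divn_eq k (t * d)) {1}(divn_eq (k %/ (t * d)) r) f4 f5 f2.
    done.
  move=> ->; rewrite /in_support /prows /pcols /=.
  apply/and3P; split; [apply/and4P; split | apply/and4P; split | ].
  - by move: hi; rewrite !mulnA.
  - exact: hk0.
  - by rewrite (divA3 k0 s r (t * d)) hk0D hk0r -E1 e1 E4 -eJ.
  - by rewrite hk0m.
  - by move: hk0; rewrite !mulnA.
  - by move: hj; rewrite !mulnA.
  - by rewrite -[r * t * d]mulnA (divA2 k0 r (t * d)) hk0D hk0r eJ.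
  - by rewrite -(modd k0 t d) hk0m modd e2.
  - by rewrite hk0D hk0rm.
rewrite (bigD1 (Ordinal hk0)) //= key eqxx big1 ?addr0 // => k hk.
rewrite key; case: eqP => // ek; case/eqP: hk; exact: val_inj.
Qed.

Lemma fdec (R : realType) a b1 s r t d c2 (Z : mat R) :
  0 < b1 -> 0 < t -> 0 < d -> 0 < c2 -> 0 < r ->
  minn b1 c2 <= r ->
  factor (Pat a (b1 * t) (s * c2) d) Z ->
  exists X Y, [/\ factor (Pat a b1 (s * r) (t * d)) X,
                  factor (Pat (a * s) (r * t) c2 d) Y &
                  Z = mulm (pcols (Pat a b1 (s * r) (t * d))) X Y].
Proof.
move=> hb1 ht hd hc2 hr hmin hZ.
set P := Pat a b1 (s * r) (t * d); set Q := Pat (a * s) (r * t) c2 d.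
case: (leqP b1 c2) => hbc.
  have hbr : b1 <= r by move: hmin; rewrite (minn_idPl hbc).
  pose X : mat R := fun i k =>
    if in_support P i k && (k %/ (t * d) %% r == i %/ (t * d) %% b1) then 1%R else 0%R.
  pose Y : mat R := fun k j =>
    if in_support Q k j && (k %/ (t * d) %% r < b1) then
      Z ((k %/ (t * d) %/ (s * r) * b1 + k %/ (t * d) %% r) * (t * d) + k %% (t * d)) j
    else 0%R.
  exists X, Y; split.
  - move=> i k; rewrite /X; case: ifP => [/andP[] // | _]; by rewrite eqxx.
  - move=> k j; rewrite /Y; case: ifP => [/andP[] // | _]; by rewrite eqxx.
  apply: functional_extensionality => i; apply: functional_extensionality => j.
  rewrite /mulm.
  have term : forall k, (X i k * Y k j =
     if [&& in_support P i k, in_support Q k j & (k %/ (t * d) %% r == i %/ (t * d) %% b1)%N]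
     then Z i j else 0)%R.
    move=> k; rewrite /X /Y.
    case hP: (in_support P i k); case hm: (k %/ (t * d) %% r == i %/ (t * d) %% b1);
      rewrite /= ?mul0r ?andbF //.
    rewrite mul1r (eqP hm) ltn_pmod // andbT; case: ifP => // _.
    move/and4P: hP => [_ _ /eqP f1 /eqP f2].
    rewrite -(divA2 k (s * r) (t * d)) -f1 (divA2 i b1 (t * d)) -f2.
    by rewrite -!divn_eq.
  under eq_bigr do rewrite term.
  case: (eqVneq (Z i j) 0%R) => hz.
    by rewrite hz big1 // => k _; case: ifP.
  rewrite sum_unique //; first exact: hZ i j hz.
  exact: leq_trans (ltn_pmod _ hb1) hbr.
have hcr : c2 <= r by move: hmin; rewrite (minn_idPr (ltnW hbc)).
pose X : mat R := fun i k =>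
  if in_support P i k && (k %/ (t * d) %% r < c2) then
    Z i ((k %/ (t * d) %/ r * c2 + k %/ (t * d) %% r) * d + k %% d)
  else 0%R.
pose Y : mat R := fun k j =>
  if in_support Q k j && (k %/ (t * d) %% r == j %/ d %% c2) then 1%R else 0%R.
exists X, Y; split.
- move=> i k; rewrite /X; case: ifP => [/andP[] // | _]; by rewrite eqxx.
- move=> k j; rewrite /Y; case: ifP => [/andP[] // | _]; by rewrite eqxx.
apply: functional_extensionality => i; apply: functional_extensionality => j.
rewrite /mulm.
have term : forall k, (X i k * Y k j =
   if [&& in_support P i k, in_support Q k j & (k %/ (t * d) %% r == j %/ d %% c2)%N]
   then Z i j else 0)%R.
  move=> k; rewrite /X /Y.
  case hQ: (in_support Q k j); case hm: (k %/ (t * d) %% r == j %/ d %% c2);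
    rewrite /= ?mulr0 ?andbF //.
  rewrite mulr1 (eqP hm) ltn_pmod // andbT; case: ifP => // _.
  move/and4P: hQ => [_ _ /eqP f1 /eqP f2].
  rewrite -(divA2 k r (t * d)) [r * (t * d)]mulnA f1 (divA2 j c2 d) f2.
  by rewrite -!divn_eq.
under eq_bigr do rewrite term.
case: (eqVneq (Z i j) 0%R) => hz.
  by rewrite hz big1 // => k _; case: ifP.
rewrite sum_unique //; first exact: hZ i j hz.
exact: leq_trans (ltn_pmod _ hc2) hcr.
Qed.


Lemma gen_facts (R : realType) p q : pattern_pos p -> pattern_pos q -> chainable_pair p q ->
  [/\ pcols (pstar p q) = pcols q, pattern_pos (pstar p q),
     (forall X Y : mat R, factor p X -> factor q Y -> factor (pstar p q) (mulm (pcols p) X Y)) &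
     (minn (pb p) (pc q) <= rpair p q -> forall Z : mat R, factor (pstar p q) Z ->
        exists X Y, [/\ factor p X, factor q Y & Z = mulm (pcols p) X Y])].
Proof.
move=> pp pq hc.
have [s [t [r [ep eq er es]]]] := chain_decomp pp pq hc.
rewrite er es.
move: ep eq es er pp pq hc; case: p => a b1 c1 d1; case: q => a2 b2 c2 d /=.
move=> [-> ->] [-> ->] _ _ pp pq hc.
move: pp pq; rewrite /pattern_pos /= !muln_gt0.
case/and4P=> ha hb1 /andP[hs hr] /andP[ht hd1] /and4P[_ /andP[_ _] hc2 hd].
split.
- by rewrite /pcols /= mulnA.
- by rewrite ha hb1 ht hs hc2 hd.
- move=> X Y; exact: fmul.
- move=> hm Z hZ; exact: fdec.
Qed.

Lemma sorted_reshape (e : rel pattern) ns s l : sorted e s -> sorted e (nth [::] (reshape ns s) l).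
Proof.
elim: ns s l => [|n ns IH] s [|l] //= hs.
  exact: take_sorted.
apply: IH; exact: drop_sorted.
Qed.

Lemma reshape_ones (s : seq pattern) : map iprod (reshape (nseq (size s) 1) s) = s.
Proof. elim: s => //= x s IH; rewrite drop0 take0 IH. by []. Qed.

Definition Inv (R : realType) (beta b : seq pattern) : Prop :=
  [/\ all pattern_pos b, chainable b,
      (exists ns : seq nat, [/\ all (fun n => 0 < n) ns, sumn ns = size beta &
                                b = map iprod (reshape ns beta)]),
      (forall M : mat R, Bset b M <-> Bset beta M) &
      norm0 b <= norm0 beta].

Lemma Inv_step (R : realType) beta b1 b2 : chainable beta -> Inv R beta b1 -> rr_step b1 b2 -> Inv R beta b2.
Proof.
move=> hcb [hpos hch [ns [hns hsum eb]] hB hN] [_ [l [hl [hred ->]]]].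
set p := nth dflt_pattern b1 l; set q := nth dflt_pattern b1 l.+1.
have hp : pattern_pos p by apply: (all_nthP _ hpos); apply: ltnW.
have hq : pattern_pos q by apply: (all_nthP _ hpos).
have hpq : chainable_pair p q by case/andP: hred.
have [hcols hpospq hmul hdec] := gen_facts R hp hq hpq.
have hsplit := take_drop_split dflt_pattern hl.
split.
- move: hpos; rewrite {1}hsplit /merge_at !all_cat /= -/p -/q.
  by case/and4P=> -> _ _ ->; rewrite hpospq.
- move: hch; rewrite /chainable {1}hsplit /merge_at -/p -/q.
  apply: consec_mid => w; [exact: chain_left | exact: chain_right].
- have hsz : size ns = size b1 by rewrite eb size_map size_reshape.
  have hln : l.+1 < size ns by rewrite hsz.
  have hnsplit := take_drop_split 0 hln.
  exists (take l ns ++ (nth 0 ns l + nth 0 ns l.+1) :: drop l.+2 ns); split.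
  + move: hns; rewrite {1}hnsplit !all_cat /=.
    by case/and4P=> -> h1 _ ->; rewrite addn_gt0 h1.
  + by rewrite -hsum [in RHS]hnsplit !sumn_cat /=; lia.
  + set RS := reshape ns beta.
    have hRS : l.+1 < size RS by rewrite size_reshape.
    have hsh : shape RS = ns by rewrite reshapeKl // hsum.
    have hsize : forall m, m < size ns -> 0 < size (nth [::] RS m).
      move=> m hm; rewrite -(nth_map [::] 0 size) ?size_reshape //.
      rewrite -/(shape RS) hsh; exact: (all_nthP _ hns).
    rewrite reshape_merge // map_cat /= map_take map_drop -/RS -eb /merge_at.
    congr (_ ++ _ :: _).
    rewrite /p /q eb !(nth_map [::]) //; last exact: ltnW.
    rewrite -/RS; symmetry; apply: iprod_cat; [exact: hsize (ltnW hln) | exact: hsize hln |].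
    have -> : nth [::] RS l ++ nth [::] RS l.+1 =
              nth [::] (reshape (take l ns ++ (nth 0 ns l + nth 0 ns l.+1) :: drop l.+2 ns) beta) l.
      rewrite reshape_merge // nth_cat size_takel ?ltnn ?subnn //.
      by rewrite size_reshape; apply: ltnW; apply: ltnW.
    apply: sorted_reshape.
    move: hcb; rewrite /chainable; case: (beta) => //= x s.
    apply: sub_path => u v; exact: chain_drel.
- move=> M; rewrite -hB; apply: Bset_merge => //.
  by move=> Z hZ; apply: hdec => //; case/andP: hred.
- apply: leq_trans hN; apply: norm0_merge => //.
Qed.

Lemma acc_size n : forall b, size b <= n -> Acc (fun b2 b1 => rr_step b1 b2) b.
Proof.
elim: n => [|n IH] b hb; constructor => b2 [_ [l [hl [_ ->]]]].
  by move: hb hl; case: b.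
apply: IH; rewrite -ltnS; apply: leq_trans hb. exact: size_merge_at hl.
Qed.

Theorem proposition4p15 (R : realType) (beta : seq pattern) :
  architecture beta -> chainable beta ->
  (* the procedure stops after finitely many iterations, whatever choices are made *)
  Acc (fun b2 b1 => rr_step b1 b2) beta /\
  (* every possible output beta' satisfies (1), (2), (3) *)
  (forall beta', rr_reach beta beta' -> ~~ redundant beta' ->
     [/\ (chainable beta' && ~~ redundant beta' /\
          exists ns : seq nat,
            [/\ all (fun n => 0 < n) ns, sumn ns = size beta &
                beta' = map iprod (reshape ns beta)]),
         (forall M : mat R, Bset beta' M <-> Bset beta M) &
         norm0 beta' <= norm0 beta]).
Proof.
move=> harch hch; split; first exact: (acc_size (leqnn _)).
move=> beta' hreach hnr.
have : Inv R beta beta'.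
  elim: hreach => [|b1 b2 _ IH hstep]; last exact: Inv_step hch IH hstep.
  case/and3P: harch => _ hpos _; split => //.
  exists (nseq (size beta) 1); split.
  - by apply/(all_nthP 0) => i; rewrite size_nseq => hi; rewrite nth_nseq hi.
  - by elim: (beta) => //= x s ->.
  - by rewrite reshape_ones.
case=> _ hc hns hB hN; split => //.
split; [by rewrite hc hnr | exact: hns].
Qed.
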